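(* Let $\mathbf{M}$ be a four-dimensional globally hyperbolic spacetime, $x\in\mathbf{M}$, and $n\geq1$ an integer. Suppose the renormalization polynomials of the locally covariant Wick powers satisfy $C_{2m}=(2m-1)!!\,\alpha^{m}R^{m}$ for all $m=1,\dots,n$, where $C_2=\alpha R$. Then a quasi-free Hadamard state $\omega$ on $\mathbf{M}$ is $\mathbf{T}_{2n}(x)$-thermal if and only if it is $\mathbf{T}_{2}(x)$-thermal. If moreover $n\geq 2$, then such a state has a sharp local temperature at $x$, i.e.\ the witnessing measure $\rho_x$ is a Dirac measure.
   Context: Consider the free massless conformally coupled scalar field on a globally hyperbolic spacetime $\mathbf{M}$ (signature $(-,+,+,+)$), with field equation $(-\Box+\tfrac16 R)\phi=0$, $R$ the Ricci scalar. For a Hadamard state, $:\!\phi^k\!:_h(x)$ denotes the Wick power obtained by point splitting and subtracting the Hadamard parametrix. The locally covariant Wick powers are $:\!\phi^{k}\!:_{\mathbf{M}}(x)=:\!\phi^{k}\!:_h(x)+\sum_{j=0}^{k-2}\binom{k}{j}C_{k-j}(x)\,:\!\phi^{j}\!:_h(x)$, where the $C_i$ are locally covariant polynomials with real coefficients in the metric and curvature with appropriate scaling dimension; in particular $C_2=\alpha R$ for a real constant $\alpha$. A state is quasi-free if its odd $n$-point functions vanish and its even ones are sums over pairings of products of two-point functions. In Minkowski spacetime, let $\omega_\beta$ ($\beta>0$) be the global thermal equilibrium state at inverse temperature $\beta$ of the free massless field; it satisfies $\omega_\beta(:\!\phi^{2k}\!:(0))=\frac{(2k-1)!!}{12^k\beta^{2k}}$.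 Let $\mathbf{T}_{2n}=\{\mathbf{1},:\!\phi^2\!:,\dots,:\!\phi^{2n}\!:\}$. A state $\omega$ on $\mathbf{M}$ is $\mathbf{T}_{2n}(x)$-thermal if there is a probability measure $\rho_x$ on $(0,\infty)$ with $\omega(:\!\phi^{2k}\!:_{\mathbf{M}}(x))=\int d\rho_x(\beta)\,\frac{(2k-1)!!}{12^k\beta^{2k}}$ for all $k=0,\dots,n$. It has a sharp local temperature at $x$ if $\rho_x$ is a Dirac measure. *)

(* Defs.v *)
From mathcomp Require Import all_boot all_order all_algebra.
From mathcomp Require Import all_classical all_reals all_analysis.
Set Implicit Arguments. Unset Strict Implicit. Unset Printing Implicit Defensive.
Import Order.TTheory GRing.Theory Num.Theory.
Local Open Scope classical_set_scope.
Local Open Scope ring_scope.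

(* odfact k = (2k-1)!! = 1 * 3 * ... * (2k-1), with odfact 0 = (-1)!! = 1. *)
Definition odfact (k : nat) : nat := \prod_(i < k) (2 * i + 1)%N.

(* h k models omega(:phi^k:_h(x)), the expectation value at the fixed point x
   of the Hadamard-point-split Wick power in the state omega.
   For a quasi-free Hadamard state, by Wick's theorem (pairings of the
   Hadamard-subtracted two-point function at coincidence):
   omega(1)=1, odd powers vanish, and omega(:phi^{2k}:_h) = (2k-1)!! omega(:phi^2:_h)^k. *)
Definition quasi_free_at {R : realType} (h : nat -> R) : Prop :=
  [/\ h 0%N = 1,
      (forall k, h k.*2.+1 = 0) &
      (forall k, h k.*2 = (odfact k)%:R * (h 2%N) ^+ k)].

(* omega(:phi^k:_M(x)) = omega(:phi^k:_h(x)) + sum_{j=0}^{k-2} binom(k,j) C_{k-j}(x) omega(:phi^j:_h(x)),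
   C i = value at x of the renormalization polynomial C_i. *)
Definition wickM {R : realType} (C h : nat -> R) (k : nat) : R :=
  h k + \sum_(0 <= j < k.-1) ('C(k, j))%:R * C (k - j)%N * h j.

Definition thermal_moment {R : realType} (k : nat) (beta : R) : R :=
  (odfact k)%:R / (12%:R ^+ k * beta ^+ (2 * k)).

(* rho (a probability measure on R concentrated on (0,oo), i.e. a probability
   measure on (0,oo)) witnesses T_{2n}(x)-thermality. *)
Definition thermal_witness {R : realType} (n : nat) (C h : nat -> R)
    (rho : probability R R) : Prop :=
  rho [set b : R | b <= 0] = 0%E /\
  forall k, (k <= n)%N ->
    (\int[rho]_(b in [set b : R | (0 < b)%R]) (thermal_moment k b)%:E)%E
       = (wickM C h k.*2)%:E.

Definition T_thermal {R : realType} (n : nat) (C h : nat -> R) : Prop :=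
  exists rho : probability R R, thermal_witness n C h rho.

Definition dirac_at_pos {R : realType} (rho : probability R R) : Prop :=
  exists beta : R, 0 < beta /\
    forall A : set R, measurable A -> rho A = \d_beta A.

(* Main.v *)
Require Import Defs.
From mathcomp Require Import all_boot all_order all_algebra.
From mathcomp Require Import all_classical all_reals all_analysis.
From mathcomp Require Import ring lra measurable_realfun.
Import Order.TTheory GRing.Theory Num.Theory.
Local Open Scope classical_set_scope.
Local Open Scope ring_scope.

Lemma odfactS m : odfact m.+1 = (odfact m * (2 * m + 1))%N.
Proof. by rewrite /odfact big_ord_recr. Qed.

Lemma odfact_fact m : (odfact m * 2 ^ m * m`! = (2 * m)`!)%N.
Proof.
elim: m => [|m IH]; first by rewrite /odfact big_ord0.
rewrite odfactS expnS factS.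
have -> : (2 * m.+1 = (2 * m + 1).+1)%N by rewrite mulnS addn1 add2n.
rewrite factS addn1 factS -addn1 -IH.
have -> : ((2 * m + 1).+1 = 2 * m.+1)%N by rewrite addn1 mulnS add2n.
ring.
Qed.

Lemma key k i : (i <= k)%N ->
  ('C(2 * k, 2 * i) * odfact (k - i) * odfact i = odfact k * 'C(k, i))%N.
Proof.
move=> ik.
have pos : (0 < 2 ^ k * (i`! * (k - i)`!))%N.
  by rewrite !muln_gt0 expn_gt0 !fact_gt0.
apply/eqP; rewrite -(eqn_pmul2r pos); apply/eqP.
have e1 : (odfact k * 'C(k, i) * (2 ^ k * (i`! * (k - i)`!)) = (2 * k)`!)%N.
  rewrite -odfact_fact -(bin_fact ik); ring.
have ik2 : (2 * i <= 2 * k)%N by rewrite leq_mul2l.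
have e2 : ('C(2 * k, 2 * i) * odfact (k - i) * odfact i *
   (2 ^ k * (i`! * (k - i)`!)) = (2 * k)`!)%N.
  rewrite -(bin_fact ik2) -mulnBr -!odfact_fact.
  have -> : (2 ^ k = 2 ^ i * 2 ^ (k - i))%N by rewrite -expnD subnKC.
  ring.
by rewrite e1 e2.
Qed.

Lemma sum_split (R : realType) (F : nat -> R) m :
  \sum_(0 <= j < (2 * m).+1) F j =
  \sum_(0 <= i < m.+1) F (2 * i)%N + \sum_(0 <= i < m) F (2 * i).+1.
Proof.
elim: m => [|m IH]; first by rewrite !big_nat1 big_geq// muln0 addr0.
have -> : (2 * m.+1).+1 = ((2 * m).+1).+2 by rewrite mulnS add2n.
rewrite big_nat_recr // big_nat_recr // IH.
rewrite (big_nat_recr m.+1) // (big_nat_recr m) //=.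
have e : (2 * m.+1 = (2 * m).+2)%N by rewrite mulnS add2n.
rewrite e [X in _ = _ + X]big_nat_recr //=.
rewrite -!addrA; congr (_ + _).
by congr (_ + _); rewrite [RHS]addrC -addrA.
Qed.

Lemma wick_val (R : realType) n (alpha Ric : R) (C h : nat -> R) k :
  (forall m : nat, (1 <= m <= n)%N -> C m.*2 = (odfact m)%:R * (alpha ^+ m * Ric ^+ m)) ->
  quasi_free_at h -> (k <= n)%N ->
  wickM C h k.*2 = (odfact k)%:R * (h 2%N + alpha * Ric) ^+ k.
Proof.
move=> HC [h0 hodd hev] kn.
case: k kn => [|m] kn.
  by rewrite /wickM big_geq // h0 addr0 /odfact big_ord0 expr0 mulr1.
set k := m.+1.
rewrite /wickM.
have -> : (k.*2).-1 = (2 * m).+1 by rewrite /k -mul2n mulnS add2n.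
rewrite sum_split.
rewrite [X in _ + (_ + X)]big1_seq ?addr0; last first.
  by move=> i _; rewrite mul2n hodd mulr0.
rewrite big_mkord addrC (addrC (h 2%N)) exprDn [in RHS]big_ord_recr /=.
rewrite mulrDr; congr (_ + _); last first.
  rewrite subnn expr0 mul1r binn mulr1n hev mulrC.
  by [].
rewrite mulr_sumr; apply: eq_bigr => -[i /= ik] _.
have ik' : (i <= k)%N by apply: ltnW.
have e : (k.*2 - 2 * i = (k - i).*2)%N by rewrite -!mul2n mulnBr.
rewrite e HC; last by apply/andP; split; [rewrite subn_gt0 | apply: leq_trans kn; rewrite leq_subr].
rewrite mul2n hev.
have K := @key k i ik'.
move: K => /(congr1 (fun x => x%:R : R)); rewrite !natrM => K.
rewrite -!mul2n exprMn -mulr_natr.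
transitivity (('C(2 * k, 2 * i))%:R * (odfact (k - i))%:R * (odfact i)%:R *
   (alpha ^+ (k - i) * Ric ^+ (k - i) * h 2%N ^+ i)); first by ring.
by rewrite K; ring.
Qed.

Definition Dp (R : realType) : set R := [set b : R | 0 < b].

Lemma mDp (R : realType) : measurable (Dp R).
Proof. by apply: open_measurable; exact: open_gt. Qed.

Lemma mtm (R : realType) k : measurable_fun (Dp R) (fun b => (thermal_moment k b)%:E).
Proof.
apply/measurable_realfun.measurable_EFinP.
apply: open_continuous_measurable_fun; first exact: open_gt.
move=> x; rewrite inE /= => x0; rewrite /thermal_moment.
apply: (@continuousM R R^o (fun=> (odfact k)%:R) (fun b => (12%:R ^+ k * b ^+ (2 * k))^-1)).
  exact: (@cst_continuous R^o R^o _ x).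
apply: (@continuousV R R^o (fun b => 12%:R ^+ k * b ^+ (2 * k))).
  by rewrite mulf_neq0 // ?expf_neq0 // ?gt_eqF.
apply: (@continuousM R R^o (fun=> 12%:R ^+ k) (fun b => b ^+ (2 * k))).
  exact: (@cst_continuous R^o R^o _ x).
exact: exprn_continuous.
Qed.

Lemma Dp_one (R : realType) (rho : probability R R) :
  rho [set b : R | b <= 0] = 0%E -> rho (Dp R) = 1%E.
Proof.
move=> H.
have e : [set b : R | b <= 0] = ~` Dp R.
  by apply/seteqP; split => x /=; rewrite /Dp /= leNgt => /negP.
rewrite -(setCK (Dp R)) probability_setC; last exact: measurableC (mDp R).
by rewrite -e H sube0.
Qed.

Lemma zero_int (R : realType) (rho : probability R R) (f : R -> R) (S : set R) :
  measurable_fun (Dp R) (fun x => (f x)%:E) -> (forall x, Dp R x -> 0 <= f x) ->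
  (\int[rho]_(x in Dp R) (f x)%:E = 0)%E -> measurable S -> S `<=` Dp R ->
  (forall x, S x -> f x != 0) -> rho S = 0%E.
Proof.
move=> mf f0 I0 mS SD Sf.
have : (\int[rho]_(x in Dp R) `|(f x)%:E| = 0)%E.
  rewrite -I0; apply: eq_integral => x; rewrite inE => Dx.
  by rewrite gee0_abs // lee_fin f0.
move/(ae_eq_integral_abs rho (mDp R) mf) => [N [mN N0 sub]].
apply: (subset_measure0 mS mN) => // x Sx; apply: sub => /= H.
by move: (Sf x Sx); rewrite -(@eqe _ (f x) 0) (H (SD x Sx)) eqxx.
Qed.

Lemma Dp_compl (R : realType) : [set b : R | b <= 0] = ~` Dp R.
Proof. by apply/seteqP; split => x /=; rewrite /Dp /= leNgt => /negP. Qed.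

Lemma odfact1 : odfact 1 = 1%N.
Proof. by rewrite /odfact big_ord1. Qed.

Lemma odfact2 : odfact 2 = 3%N.
Proof. by rewrite odfactS odfact1. Qed.

Lemma odfact_gt0 k : (0 < odfact k)%N.
Proof. by apply: prodn_gt0 => i; rewrite addn1. Qed.

Lemma tm_gt0 (R : realType) k (b : R) : 0 < b -> 0 < thermal_moment k b.
Proof.
move=> b0; rewrite /thermal_moment divr_gt0 // ?ltr0n ?odfact_gt0 //.
by rewrite mulr_gt0 // exprn_gt0.
Qed.

Theorem corollary1 (R : realType) (n : nat) (alpha Ric : R) (C h : nat -> R) :
  (1 <= n)%N ->
  C 2%N = alpha * Ric ->
  (forall m : nat, (1 <= m <= n)%N -> C m.*2 = (odfact m)%:R * (alpha ^+ m * Ric ^+ m)) ->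
  quasi_free_at h ->
  (T_thermal n C h <-> T_thermal 1 C h) /\
  ((2 <= n)%N -> forall rho : probability R R,
      thermal_witness n C h rho -> dirac_at_pos rho).
Proof.
move=> n1 HC2 HC hq.
set T := h 2%N + alpha * Ric.
have W k : (k <= n)%N -> wickM C h k.*2 = (odfact k)%:R * T ^+ k.
  by move=> kn; exact: wick_val HC hq kn.
have I1 rho m : (1 <= m)%N -> thermal_witness m C h rho ->
    (\int[rho]_(b in Dp R) (thermal_moment 1 b)%:E = T%:E)%E.
  move=> m1 [_ HI]; rewrite (HI 1%N m1) W // odfact1 mul1r expr1 //.
have Tpos rho m : (1 <= m)%N -> thermal_witness m C h rho -> 0 < T.
  move=> m1 Hw; have J := I1 rho m m1 Hw.
  have T0 : 0 <= T.
    rewrite -lee_fin -J; apply: integral_ge0 => b b0.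
    by rewrite lee_fin ltW // tm_gt0.
  rewrite lt_neqAle T0 andbT; apply/negP => /eqP T0'.
  have : rho (Dp R) = 0%E.
    apply: (@zero_int R rho (thermal_moment 1) (Dp R)) => //.
    - exact: mtm.
    - by move=> x x0; rewrite ltW // tm_gt0.
    - by rewrite J -T0'.
    - exact: mDp.
    - by move=> x x0; rewrite gt_eqF // tm_gt0.
  case: Hw => H0 _; by rewrite Dp_one // => /eqP; rewrite onee_eq0.
split.
  split.
    move=> [rho [H0 HI]]; exists rho; split => // k k1.
    by apply: HI; apply: leq_trans k1 n1.
  move=> [rho Hw]; have Tp := Tpos rho 1%N (leqnn 1) Hw.
  pose beta := Num.sqrt ((12%:R * T)^-1).
  have b0 : 0 < beta by rewrite sqrtr_gt0 invr_gt0 mulr_gt0.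
  have tmb k : thermal_moment k beta = (odfact k)%:R * T ^+ k.
    rewrite /thermal_moment exprM sqr_sqrtr; last by rewrite invr_ge0 mulr_ge0 // ltW.
    rewrite -exprMn.
    have -> : 12%:R * (12%:R * T)^-1 = T^-1.
      by field; rewrite (gt_eqF Tp).
    by rewrite exprVn invrK.
  exists (\d_beta); split.
    by rewrite /= diracE memNset //=; apply/negP; rewrite -ltNge.
  move=> k kn.
  rewrite integral_dirac; [|exact: mDp|exact: mtm].
  by rewrite diracE mem_set // mul1e tmb W.
move=> n2 rho Hw.
have Tp := Tpos rho n n1 Hw.
case: Hw => [H0 HI].
have J1 := HI 1%N n1; rewrite W // odfact1 mul1r expr1 in J1.
have J2 := HI 2%N n2; rewrite W // odfact2 in J2.
have rD := @Dp_one R rho H0.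
pose g b := (thermal_moment 1 b - T) ^+ 2.
have mtm1 : measurable_fun (Dp R) (thermal_moment 1).
  by apply/measurable_EFinP; exact: (mtm R 1).
have mg : measurable_fun (Dp R) g.
  apply: (measurableT_comp (exprn_measurable 2)).
  by apply: measurable_funB => //; exact: measurable_cst.
have mp : measurable_fun (Dp R) (fun b => 3%:R * g b).
  exact: (measurableT_comp (mulrl_measurable 3%:R) mg).
have mq : measurable_fun (Dp R) (fun b => (6%:R * T) * thermal_moment 1 b).
  exact: (measurableT_comp (mulrl_measurable _) mtm1).
have pt : forall b, Dp R b ->
    ((3%:R * g b)%:E + ((6%:R * T) * thermal_moment 1 b)%:E =
     (thermal_moment 2 b)%:E + (3%:R * T ^+ 2)%:E)%E.
  move=> b b0; rewrite -!EFinD; congr EFin.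
  rewrite /g /thermal_moment odfact1 odfact2.
  have bn : b != 0 by rewrite gt_eqF.
  by field; exact: bn.
have E : (\int[rho]_(b in Dp R) (3%:R * g b)%:E + (6%:R * T * T)%:E =
          (3%:R * T ^+ 2)%:E + (3%:R * T ^+ 2)%:E)%E.
  have -> : (6%:R * T * T)%:E = (\int[rho]_(b in Dp R) ((6%:R * T) * thermal_moment 1 b)%:E)%E.
    under eq_integral do rewrite EFinM.
    rewrite ge0_integralZl //; try exact: mDp; try exact: (mtm R 1).
    - by rewrite J1 -EFinM.
    all: try by move=> x x0; rewrite lee_fin ltW // tm_gt0.
    all: try by rewrite lee_fin mulr_ge0 // ltW.
  rewrite -ge0_integralD //; try exact: mDp; try exact/measurable_EFinP.
    all: try by move=> x x0; rewrite lee_fin; apply: mulr_ge0; [apply: mulr_ge0 => //; exact: ltW | exact/ltW/tm_gt0].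
    all: try by move=> x _; rewrite lee_fin mulr_ge0 // sqr_ge0.
  rewrite (eq_integral (fun b => (thermal_moment 2 b)%:E + (3%:R * T ^+ 2)%:E))%E; last first.
    by move=> x; rewrite inE; exact: pt.
  rewrite ge0_integralD //; try exact: mDp; try exact: measurable_cst; try exact: (mtm R 2).
    all: try by move=> x _; rewrite lee_fin mulr_ge0 // sqr_ge0.
    all: try by move=> x x0; rewrite lee_fin ltW // tm_gt0.
  rewrite J2 (integral_cst rho (mDp R)).
  apply: f_equal; rewrite -[RHS]mule1; apply: f_equal; exact: rD.
have I0 : (\int[rho]_(b in Dp R) (3%:R * g b)%:E = 0)%E.
  move: E; set X := (\int[rho]_(b in Dp R) _)%E.
  case: X => [r| |] //=; rewrite -!EFinD => -[e].
  by congr EFin; rewrite expr2 in e; nra.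
pose beta := Num.sqrt ((12%:R * T)^-1).
have b0 : 0 < beta by rewrite sqrtr_gt0 invr_gt0 mulr_gt0.
have N1 : rho (Dp R `&` ~` [set beta]) = 0%E.
  apply: (@zero_int R rho (fun b => 3%:R * g b) (Dp R `&` ~` [set beta])) => //.
  - exact/measurable_EFinP.
  - by move=> x _; rewrite mulr_ge0 // sqr_ge0.
  - by apply: measurableI; [exact: mDp | apply: measurableC; exact: measurable_set1].
  move=> x [x0 xb]; rewrite mulf_neq0 ?pnatr_eq0 // /g expf_neq0 //.
  apply/negP; rewrite subr_eq0 /thermal_moment odfact1 => /eqP e; apply: xb => /=.
  have x0' : 0 < x := x0.
  have xx : x ^+ 2 = (12%:R * T)^-1.
    rewrite -e expr1 muln1; field.
    by rewrite gt_eqF.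
  by rewrite /beta -xx sqrtr_sqr ger0_norm // ltW.
have N2 : rho (~` [set beta]) = 0%E.
  apply/eqP; rewrite eq_le measure_ge0 andbT.
  have ms : measurable (~` [set beta]) by apply: measurableC; exact: measurable_set1.
  apply: (@le_trans _ _ (rho (~` Dp R `|` (Dp R `&` ~` [set beta])))).
    apply: le_measure; rewrite ?inE //.
    - apply: measurableU; first exact: measurableC (mDp R).
      by apply: measurableI; [exact: mDp | exact: ms].
    - move=> x xb; have [x0|x0] := boolP (0 < x).
        by right.
      by left; apply/negP.
  apply: (le_trans (measureU2 _ _ _)).
  - exact: measurableC (mDp R).
  - by apply: measurableI; [exact: mDp | exact: ms].
  rewrite -(Dp_compl R) -[leRHS](adde0 0%E); apply: leeD; rewrite le_eqVlt; apply/orP; left; apply/eqP; [exact: H0 | exact: N1].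
have N3 : rho [set beta] = 1%E.
  by rewrite -(setCK [set beta]) probability_setC ?N2 ?sube0 //; apply: measurableC; exact: measurable_set1.
exists beta; split => // A mA.
rewrite diracE; have [bA|bA] := boolP (beta \in A).
  apply/eqP; rewrite eq_le probability_le1 //= -N3.
  apply: le_measure; rewrite ?inE //.
  by move=> x ->; rewrite -inE.
apply/eqP; rewrite eq_le measure_ge0 andbT /=.
apply: (@le_trans _ _ (rho (~` [set beta]))).
  apply: le_measure; rewrite ?inE //.
    by apply: measurableC; exact: measurable_set1.
  by move=> x xA /= xb; apply: (negP bA); rewrite -xb mem_set.
rewrite le_eqVlt; apply/orP; left; apply/eqP; exact: N2.
Qed.
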